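(* Let $(H,R)$ be a semiquasitriangular Hopf algebra with Drinfeld element $u=S(R^{(2)})R^{(1)}$, let $\mu:H\otimes H\to H$ be the multiplication, $T=\mu\circ\nu:H\to H$, and $\widetilde\nu:=(S\otimes S)\circ\nu\circ S^{-1}:H\to H\otimes H$. The following are equivalent: (1) $S(u)u\in\operatorname{Z}(H)$; (2) $S\circ T=T\circ S$; (3) $\mu\circ\nu=\mu\circ\widetilde\nu$.
   Context: All vector spaces are over a field $k$, $\otimes=\otimes_k$. For a Hopf algebra $H$ with comultiplication $\Delta$, counit $\epsilon$, antipode $S$, we use Sweedler notation $\Delta(h)=h_1\otimes h_2$, etc. $\operatorname{Z}(H)$ is the centre of $H$. For $R\in H\otimes H$ we write $R=R^{(1)}\otimes R^{(2)}$ (summation understood); $R'^{(1)}\otimes R'^{(2)}$ denotes another copy of $R$. Definition (semiquasitriangular Hopf algebra): a pair $(H,R)$ with $H$ a Hopf algebra with bijective antipode and $R\in H\otimes H$ invertible such that (1) $R^{(1)}_1\otimes R^{(1)}_2\otimes R^{(2)} = R^{(1)}\otimes R'^{(1)}\otimes R^{(2)}R'^{(2)}$; (2) $R^{(1)}\otimes R^{(2)}_1\otimes R^{(2)}_2 = R^{(1)}R'^{(1)}\otimes R'^{(2)}\otimes R^{(2)}$; (3) $R^{(1)}\otimes R^{(2)}_2R'^{(1)}\otimes R^{(2)}_1R'^{(2)} = R^{(1)}\otimes R'^{(1)}R^{(2)}_1\otimes R'^{(2)}R^{(2)}_2$; (4) $R^{(1)}_2R'^{(1)}\otimes R^{(1)}_1R'^{(2)}\otimes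 R^{(2)} = R'^{(1)}R^{(1)}_1\otimes R'^{(2)}R^{(1)}_2\otimes R^{(2)}$; (5) $\nu(h):=R^{(2)}h_2R'^{(2)}\otimes S(h_1)S(R^{(1)})h_3R'^{(1)}\in H\otimes\operatorname{Z}(H)$ for all $h\in H$; (6) $\nu(h)=R^{(1)}h_2R'^{(1)}\otimes S(R'^{(2)})S(h_1)R^{(2)}h_3$ for all $h\in H$. The map $\nu$ in the claim is the one defined in (5); thus $T(h)=R^{(2)}h_2R'^{(2)}S(h_1)S(R^{(1)})h_3R'^{(1)}$. *)

(* Defs.v *)
From HB Require Import structures.
From mathcomp Require Import all_boot all_algebra.

Set Implicit Arguments.
Unset Strict Implicit.
Unset Printing Implicit Defensive.

Import GRing.Theory.
Local Open Scope ring_scope.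

(* Tensors in H (x) H (resp. H (x) H (x) H) are represented by finite formal
   sums, i.e. sequences of pairs (triples) of elements of H.  Two such
   representatives denote the same tensor iff every bilinear (trilinear) map
   into every k-vector space takes the same value on them (universal property
   of the tensor product). *)

Section Hopf.
Variables (k : fieldType) (H : algType k).

Definition bilinear_map (W : lmodType k) (b : H -> H -> W) : Prop :=
  (forall (a : k) (x x' y : H), b (a *: x + x') y = a *: b x y + b x' y) /\
  (forall (a : k) (x y y' : H), b x (a *: y + y') = a *: b x y + b x y').

Definition trilinear_map (W : lmodType k) (b : H -> H -> H -> W) : Prop :=
  (forall (a : k) (x x' y z : H), b (a *: x + x') y z = a *: b x y z + b x' y z) /\
  (forall (a : k) (x y y' z : H), b x (a *: y + y') z = a *: b x y z + b x y' z) /\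
  (forall (a : k) (x y z z' : H), b x y (a *: z + z') = a *: b x y z + b x y z').

Definition teq2 (s t : seq (H * H)) : Prop :=
  forall (W : lmodType k) (b : H -> H -> W), bilinear_map b ->
    \sum_(p <- s) b p.1 p.2 = \sum_(p <- t) b p.1 p.2.

Definition teq3 (s t : seq (H * H * H)) : Prop :=
  forall (W : lmodType k) (b : H -> H -> H -> W), trilinear_map b ->
    \sum_(p <- s) b p.1.1 p.1.2 p.2 = \sum_(p <- t) b p.1.1 p.1.2 p.2.

Definition tmul2 (s t : seq (H * H)) : seq (H * H) :=
  [seq (p.1 * q.1, p.2 * q.2) | p <- s, q <- t].

Definition central (z : H) : Prop := forall x : H, x * z = z * x.

Definition in_centre (z : H) : Prop := central z.

Variables (Delta : H -> seq (H * H)) (eps : H -> k) (S : H -> H).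

(* (Delta (x) id) o Delta : h |-> h_1 (x) h_2 (x) h_3 *)
Definition Delta3 (h : H) : seq (H * H * H) :=
  [seq (c.1, c.2, d.2) | d <- Delta h, c <- Delta d.1].

Definition is_hopf : Prop :=
  (forall (a : k) (x y : H),
      teq2 (Delta (a *: x + y)) ([seq (a *: p.1, p.2) | p <- Delta x] ++ Delta y)) /\
  (forall h : H, teq3 (Delta3 h) [seq (d.1, c.1, c.2) | d <- Delta h, c <- Delta d.2]) /\
  (forall (a : k) (x y : H), eps (a *: x + y) = a * eps x + eps y) /\
  (forall h : H, \sum_(p <- Delta h) eps p.1 *: p.2 = h) /\
  (forall h : H, \sum_(p <- Delta h) eps p.2 *: p.1 = h) /\
  (forall x y : H, teq2 (Delta (x * y)) (tmul2 (Delta x) (Delta y))) /\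
  teq2 (Delta 1) [:: (1, 1)] /\
  (forall x y : H, eps (x * y) = eps x * eps y) /\
  eps 1 = 1 /\
  (forall (a : k) (x y : H), S (a *: x + y) = a *: S x + S y) /\
  (forall h : H, \sum_(p <- Delta h) S p.1 * p.2 = eps h *: 1) /\
  (forall h : H, \sum_(p <- Delta h) p.1 * S p.2 = eps h *: 1).

Variable (Rm : seq (H * H)).

(* nu(h) = R^(2) h_2 R'^(2) (x) S(h_1) S(R^(1)) h_3 R'^(1) *)
Definition nu (h : H) : seq (H * H) :=
  flatten [seq [seq (r.2 * x.1.2 * s.2, S x.1.1 * S r.1 * x.2 * s.1)
               | x <- Delta3 h, s <- Rm] | r <- Rm].

(* R^(1) h_2 R'^(1) (x) S(R'^(2)) S(h_1) R^(2) h_3 *)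
Definition nu' (h : H) : seq (H * H) :=
  flatten [seq [seq (r.1 * x.1.2 * s.1, S s.2 * S x.1.1 * r.2 * x.2)
               | x <- Delta3 h, s <- Rm] | r <- Rm].

Definition is_semiquasitriangular : Prop :=
  (exists Ri : seq (H * H),
      teq2 (tmul2 Rm Ri) [:: (1, 1)] /\ teq2 (tmul2 Ri Rm) [:: (1, 1)]) /\
  teq3 [seq (c.1, c.2, r.2) | r <- Rm, c <- Delta r.1]
       [seq (r.1, s.1, r.2 * s.2) | r <- Rm, s <- Rm] /\
  teq3 [seq (r.1, c.1, c.2) | r <- Rm, c <- Delta r.2]
       [seq (r.1 * s.1, s.2, r.2) | r <- Rm, s <- Rm] /\
  teq3 (flatten [seq [seq (r.1, c.2 * s.1, c.1 * s.2) | c <- Delta r.2, s <- Rm]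
                | r <- Rm])
       (flatten [seq [seq (r.1, s.1 * c.1, s.2 * c.2) | c <- Delta r.2, s <- Rm]
                | r <- Rm]) /\
  teq3 (flatten [seq [seq (c.2 * s.1, c.1 * s.2, r.2) | c <- Delta r.1, s <- Rm]
                | r <- Rm])
       (flatten [seq [seq (s.1 * c.1, s.2 * c.2, r.2) | c <- Delta r.1, s <- Rm]
                | r <- Rm]) /\
  (* (5) nu(h) lies in H (x) Z(H) *)
  (forall h : H, exists t : seq (H * H),
      teq2 (nu h) t /\ (forall p, p \in t -> in_centre p.2)) /\
  (forall h : H, teq2 (nu h) (nu' h)).

Definition drinfeld : H := \sum_(r <- Rm) S r.2 * r.1.

Definition mu (t : seq (H * H)) : H := \sum_(p <- t) p.1 * p.2.

Definition Tmap (h : H) : H := mu (nu h).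

Definition nu_tilde (Sinv : H -> H) (h : H) : seq (H * H) :=
  [seq (S p.1, S p.2) | p <- nu (Sinv h)].

End Hopf.

(* Main.v *)
Require Import Defs.
From HB Require Import structures.
From mathcomp Require Import all_boot all_algebra.
Import GRing.Theory.
Local Open Scope ring_scope.

Set Implicit Arguments.
Unset Strict Implicit.
Unset Printing Implicit Defensive.

Section Main.
Variables (k : fieldType) (H : algType k).
Implicit Types W : lmodType k.

Definition lin (W : lmodType k) (f : H -> W) :=
  forall (a : k) (x y : H), f (a *: x + y) = a *: f x + f y.

Lemma lin0 W (f : H -> W) : lin f -> f 0 = 0.
Proof.
move=> hf; have h := hf 1 0 0; rewrite !scale1r addr0 in h.
by apply: (addrI (f 0)); rewrite addr0 -h.
Qed.

Lemma linD W (f : H -> W) : lin f -> forall x y, f (x + y) = f x + f y.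
Proof. by move=> hf x y; have := hf 1 x y; rewrite !scale1r. Qed.

Lemma linZ W (f : H -> W) : lin f -> forall a x, f (a *: x) = a *: f x.
Proof. by move=> hf a x; rewrite -[a *: x]addr0 hf lin0 // addr0. Qed.

Lemma linN W (f : H -> W) : lin f -> forall x, f (- x) = - f x.
Proof. by move=> hf x; rewrite -[- x]scaleN1r (linZ hf) scaleN1r. Qed.

Lemma linB W (f : H -> W) : lin f -> forall x y, f (x - y) = f x - f y.
Proof. by move=> hf x y; rewrite linD // linN. Qed.

Lemma lin_sum W (f : H -> W) I (s : seq I) (F : I -> H) : lin f ->
  f (\sum_(i <- s) F i) = \sum_(i <- s) f (F i).
Proof.
move=> hf; elim: s => [|i s IH]; first by rewrite !big_nil lin0.
by rewrite !big_cons linD // IH.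
Qed.

Lemma lin_id : lin (fun x : H => x).
Proof. by []. Qed.

Lemma lin_mull (f : H -> H) (A : H) : lin f -> lin (fun x => A * f x).
Proof. by move=> hf a x y; rewrite hf mulrDr scalerAr. Qed.

Lemma lin_mulr (f : H -> H) (B : H) : lin f -> lin (fun x => f x * B).
Proof. by move=> hf a x y; rewrite hf mulrDl scalerAl. Qed.

Lemma lin_comp W (f : H -> H) (g : H -> W) : lin f -> lin g -> lin (fun x => g (f x)).
Proof. by move=> hf hg a x y; rewrite hf hg. Qed.

Lemma lin_big W I (s : seq I) (F : I -> H -> W) :
  (forall i, lin (F i)) -> lin (fun x => \sum_(i <- s) F i x).
Proof.
move=> hF a x y; elim: s => [|i s IH]; first by rewrite !big_nil scaler0 addr0.
rewrite !big_cons IH hF scalerDr.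
by rewrite -!addrA; congr (_ + _); rewrite addrCA.
Qed.

Lemma lin_scal W (f : H -> k) (v : W) :
  (forall a x y, f (a *: x + y) = a * f x + f y) -> lin (fun x => f x *: v).
Proof. by move=> hf a x y; rewrite hf scalerDl scalerA. Qed.

Lemma lin_scalv W (f : H -> W) (c : k) : lin f -> lin (fun x => c *: f x).
Proof. by move=> hf a x y; rewrite hf scalerDr !scalerA mulrC. Qed.

Lemma lin_add W (f g : H -> W) : lin f -> lin g -> lin (fun x => f x + g x).
Proof.
move=> hf hg a x y; rewrite hf hg scalerDr -!addrA; congr (_ + _).
by rewrite addrCA.
Qed.

Lemma bilinP W (b : H -> H -> W) :
  (forall y, lin (fun x => b x y)) -> (forall x, lin (b x)) -> bilinear_map b.
Proof. by move=> h1 h2; split=> a x x' y; [apply: h1 | apply: h2]. Qed.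

Lemma trilinP W (b : H -> H -> H -> W) :
  (forall y z, lin (fun x => b x y z)) -> (forall x z, lin (fun y => b x y z)) ->
  (forall x y, lin (b x y)) -> trilinear_map b.
Proof.
by move=> h1 h2 h3; split; [|split]=> a x y y' z; [apply: h1|apply: h2|apply: h3].
Qed.

Lemma lin_G1 W (G : H * H -> W) (f : H -> H) v :
  bilinear_map (fun a b => G (a, b)) -> lin f -> lin (fun x => G (f x, v)).
Proof. by case=> h1 _ hf a x y; rewrite hf h1. Qed.
Lemma lin_G2 W (G : H * H -> W) (f : H -> H) u :
  bilinear_map (fun a b => G (a, b)) -> lin f -> lin (fun x => G (u, f x)).
Proof. by case=> _ h2 hf a x y; rewrite hf h2. Qed.

Lemma lin_b1 W (b : H -> H -> W) (f : H -> H) v :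
  bilinear_map b -> lin f -> lin (fun x => b (f x) v).
Proof. by case=> h1 _ hf a x y; rewrite hf h1. Qed.
Lemma lin_b2 W (b : H -> H -> W) (f : H -> H) u :
  bilinear_map b -> lin f -> lin (fun x => b u (f x)).
Proof. by case=> _ h2 hf a x y; rewrite hf h2. Qed.

Lemma bZl W (b : H -> H -> W) c u v : bilinear_map b -> b (c *: u) v = c *: b u v.
Proof. by move=> hb; rewrite (linZ (lin_b1 v hb lin_id)). Qed.
Lemma bZr W (b : H -> H -> W) c u v : bilinear_map b -> b u (c *: v) = c *: b u v.
Proof. by move=> hb; rewrite (linZ (lin_b2 u hb lin_id)). Qed.
Lemma bsuml W (b : H -> H -> W) I (s : seq I) F v : bilinear_map b ->
  b (\sum_(i <- s) F i) v = \sum_(i <- s) b (F i) v.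
Proof. by move=> hb; rewrite (lin_sum _ _ (lin_b1 v hb lin_id)). Qed.
Lemma bsumr W (b : H -> H -> W) I (s : seq I) F u : bilinear_map b ->
  b u (\sum_(i <- s) F i) = \sum_(i <- s) b u (F i).
Proof. by move=> hb; rewrite (lin_sum _ _ (lin_b2 u hb lin_id)). Qed.

End Main.


Section Hopf.
Variables (k : fieldType) (H : algType k).
Implicit Types W : lmodType k.
Variables (Delta : H -> seq (H * H)) (eps : H -> k) (S : H -> H).
Hypothesis hH : is_hopf Delta eps S.

Lemma Dlin a x y : teq2 (Delta (a *: x + y)) ([seq (a *: p.1, p.2) | p <- Delta x] ++ Delta y).
Proof. by case: hH => [hh _]; apply: hh. Qed.
Lemma coass h : teq3 (Delta3 Delta h) [seq (d.1, c.1, c.2) | d <- Delta h, c <- Delta d.2].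
Proof. by case: hH => [_ [hh _]]; apply: hh. Qed.
Lemma epslin a x y : eps (a *: x + y) = a * eps x + eps y.
Proof. by case: hH => [_ [_ [hh _]]]; apply: hh. Qed.
Lemma cul0 h : \sum_(p <- Delta h) eps p.1 *: p.2 = h.
Proof. by case: hH => [_ [_ [_ [hh _]]]]; apply: hh. Qed.
Lemma cur0 h : \sum_(p <- Delta h) eps p.2 *: p.1 = h.
Proof. by case: hH => [_ [_ [_ [_ [hh _]]]]]; apply: hh. Qed.
Lemma Dmul x y : teq2 (Delta (x * y)) (tmul2 (Delta x) (Delta y)).
Proof. by case: hH => [_ [_ [_ [_ [_ [hh _]]]]]]; apply: hh. Qed.
Lemma D1 : teq2 (Delta 1) [:: (1, 1)].
Proof. by case: hH => [_ [_ [_ [_ [_ [_ [hh _]]]]]]]; apply: hh. Qed.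
Lemma epsM x y : eps (x * y) = eps x * eps y.
Proof. by case: hH => [_ [_ [_ [_ [_ [_ [_ [hh _]]]]]]]]; apply: hh. Qed.
Lemma eps1 : eps 1 = 1.
Proof. by case: hH => [_ [_ [_ [_ [_ [_ [_ [_ [hh _]]]]]]]]]; apply: hh. Qed.
Lemma linS : lin S.
Proof. by case: hH => [_ [_ [_ [_ [_ [_ [_ [_ [_ [hh _]]]]]]]]]]; apply: hh. Qed.
Lemma apl0 h : \sum_(p <- Delta h) S p.1 * p.2 = eps h *: 1.
Proof. by case: hH => [_ [_ [_ [_ [_ [_ [_ [_ [_ [_ [hh _]]]]]]]]]]]; apply: hh. Qed.
Lemma apr0 h : \sum_(p <- Delta h) p.1 * S p.2 = eps h *: 1.
Proof. by case: hH => [_ [_ [_ [_ [_ [_ [_ [_ [_ [_ [_ hh]]]]]]]]]]]; apply: hh. Qed.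

Lemma eps0 : eps 0 = 0.
Proof. by have h := epslin 1 0 0; rewrite scale1r addr0 mul1r in h; apply: (addrI (eps 0)); rewrite addr0 -h. Qed.

Lemma lin_eps W (v : W) : lin (fun x => eps x *: v).
Proof. by apply: lin_scal => a x y; rewrite epslin. Qed.

Lemma bilin_l W (b : H -> H -> W) : bilinear_map b -> forall y, lin (fun x => b x y).
Proof. by case=> h1 _ y a x x'; apply: h1. Qed.
Lemma bilin_r W (b : H -> H -> W) : bilinear_map b -> forall x, lin (b x).
Proof. by case=> _ h2 x a y y'; apply: h2. Qed.

Lemma teq2_sum W s t (G : H * H -> W) : teq2 s t ->
  bilinear_map (fun a b => G (a, b)) -> \sum_(p <- s) G p = \sum_(p <- t) G p.
Proof.
move=> e hb; have /= h := e W _ hb.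
transitivity (\sum_(p <- s) G (p.1, p.2)); first by apply: eq_bigr => -[].
by rewrite h; apply: eq_bigr => -[].
Qed.

Lemma teq3_sum W s t (G : H * H * H -> W) : teq3 s t ->
  trilinear_map (fun a b c => G (a, b, c)) -> \sum_(p <- s) G p = \sum_(p <- t) G p.
Proof.
move=> e hb; have /= h := e W _ hb.
transitivity (\sum_(p <- s) G (p.1.1, p.1.2, p.2)); first by apply: eq_bigr => -[[]].
by rewrite h; apply: eq_bigr => -[[]].
Qed.

Lemma lin_Dsum W (G : H * H -> W) :
  bilinear_map (fun a b => G (a, b)) -> lin (fun x => \sum_(p <- Delta x) G p).
Proof.
move=> hb a x y; rewrite (teq2_sum (Dlin a x y) hb) big_cat /= big_map.
congr (_ + _); rewrite scaler_sumr; apply: eq_bigr => -[p1 p2] _ /=.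
by rewrite -[a *: p1]addr0 (bilin_l hb) (lin0 (bilin_l hb _)) addr0.
Qed.

Lemma coassoc W (G : H -> H -> H -> W) h : trilinear_map G ->
  \sum_(p <- Delta h) \sum_(c <- Delta p.1) G c.1 c.2 p.2 =
  \sum_(p <- Delta h) \sum_(c <- Delta p.2) G p.1 c.1 c.2.
Proof.
move=> hG; have := coass h hG.
by rewrite !big_allpairs_dep.
Qed.

Lemma cul W (f : H -> W) h : lin f -> \sum_(p <- Delta h) eps p.1 *: f p.2 = f h.
Proof.
move=> hf; rewrite -{2}(cul0 h) (lin_sum _ _ hf); apply: eq_bigr => p _.
by rewrite (linZ hf).
Qed.
Lemma cur W (f : H -> W) h : lin f -> \sum_(p <- Delta h) eps p.2 *: f p.1 = f h.
Proof.
move=> hf; rewrite -{2}(cur0 h) (lin_sum _ _ hf); apply: eq_bigr => p _.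
by rewrite (linZ hf).
Qed.
Lemma apl W (f : H -> W) h : lin f -> \sum_(p <- Delta h) f (S p.1 * p.2) = eps h *: f 1.
Proof. by move=> hf; rewrite -(lin_sum _ _ hf) apl0 (linZ hf). Qed.
Lemma apr W (f : H -> W) h : lin f -> \sum_(p <- Delta h) f (p.1 * S p.2) = eps h *: f 1.
Proof. by move=> hf; rewrite -(lin_sum _ _ hf) apr0 (linZ hf). Qed.


Lemma lin_Sc (f : H -> H) : lin f -> lin (fun x => S (f x)).
Proof. by move=> hf; apply: lin_comp hf linS. Qed.

Lemma lin_epsc W (f : H -> H) (v : W) : lin f -> lin (fun x => eps (f x) *: v).
Proof. by move=> hf; apply: lin_comp hf (lin_eps v). Qed.

Lemma lin_Dsumc W (f : H -> H) (G : H * H -> W) :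
  lin f -> bilinear_map (fun a b => G (a, b)) -> lin (fun x => \sum_(p <- Delta (f x)) G p).
Proof. by move=> hf hb; apply: lin_comp hf (lin_Dsum hb). Qed.

Lemma aprc (A B : H) h : \sum_(d <- Delta h) A * d.1 * S d.2 * B = eps h *: (A * B).
Proof.
rewrite (eq_bigr (fun d => A * (d.1 * S d.2) * B)); last by move=> d _; rewrite !mulrA.
by rewrite (apr (f := fun z => A * z * B)) ?mulr1 //; apply: lin_mulr; apply: lin_mull.
Qed.
Lemma aplc (A B : H) h : \sum_(d <- Delta h) A * S d.1 * d.2 * B = eps h *: (A * B).
Proof.
rewrite (eq_bigr (fun d => A * (S d.1 * d.2) * B)); last by move=> d _; rewrite !mulrA.
by rewrite (apl (f := fun z => A * z * B)) ?mulr1 //; apply: lin_mulr; apply: lin_mull.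
Qed.

Lemma aprc1 (A : H) h : \sum_(d <- Delta h) A * d.1 * S d.2 = eps h *: A.
Proof. by have := aprc A 1 h; rewrite mulr1 => <-; apply: eq_bigr => d _; rewrite mulr1. Qed.
Lemma aplc1 (A : H) h : \sum_(d <- Delta h) A * S d.1 * d.2 = eps h *: A.
Proof. by have := aplc A 1 h; rewrite mulr1 => <-; apply: eq_bigr => d _; rewrite mulr1. Qed.

Lemma mulr_sumlr I (r : seq I) (A B : H) (F : I -> H) :
  A * (\sum_(i <- r) F i) * B = \sum_(i <- r) A * F i * B.
Proof. by rewrite mulr_sumr mulr_suml. Qed.

Lemma sum_tmul2 W s t (G : H * H -> W) :
  \sum_(p <- tmul2 s t) G p = \sum_(a <- s) \sum_(b <- t) G (a.1 * b.1, a.2 * b.2).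
Proof. by rewrite big_allpairs_dep. Qed.

End Hopf.

Ltac lint_step :=
  first [ assumption
        | exact: lin_id
        | apply: lin_big => ?
        | apply: lin_add
        | apply: lin_mulr
        | apply: lin_mull
        | match goal with hH : is_hopf _ _ _ |- _ => apply: (lin_Sc hH) end
        | match goal with hH : is_hopf _ _ _ |- _ => apply: (lin_epsc hH) end
        | apply: lin_scalv
        | match goal with hb : bilinear_map _ |- _ =>
            first [ apply: (lin_G1 _ hb) | apply: (lin_G2 _ hb)
                  | apply: (lin_b1 _ hb) | apply: (lin_b2 _ hb) ] end
        | match goal with hl : lin ?g |- lin (fun _ => ?g _) => apply: (lin_comp _ hl) end
        | match goal with hH : is_hopf _ _ _ |- _ =>
            apply: (lin_Dsumc hH); [ | apply: bilinP => ? ] end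
        | apply: bilinP => ?
        | apply: trilinP => ? ? ].
Ltac lint := repeat (lint_step || (progress rewrite /=)).



Section Anti.
Variables (k : fieldType) (H : algType k).
Implicit Types W : lmodType k.
Variables (Delta : H -> seq (H * H)) (eps : H -> k) (S : H -> H).
Hypothesis hH : is_hopf Delta eps S.

Lemma S_mul x y : S (x * y) = S y * S x.
Proof.
have lS := linS hH.
transitivity (\sum_(p <- Delta x) \sum_(q <- Delta y)
   \sum_(c <- Delta p.1) \sum_(d <- Delta q.1) S (c.1 * d.1) * (c.2 * d.2) * (S q.2 * S p.2)); last first.
  rewrite -(cul hH (f := fun z => S y * S z) x); last by lint.
  apply: eq_bigr => p _.
  rewrite -(cul hH (f := fun z => S z * S p.2) y); last by lint.
  rewrite scaler_sumr; apply: eq_bigr => q _.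
  rewrite scalerA -(epsM hH) -[in RHS](mul1r (S q.2 * S p.2)) scalerAl -(apl0 hH) mulr_suml.
  rewrite (teq2_sum (Dmul hH _ _)); last by lint.
  by rewrite sum_tmul2.
symmetry.
transitivity (\sum_(p <- Delta x) \sum_(c <- Delta p.1) \sum_(q <- Delta y)
   \sum_(d <- Delta q.2) S (c.1 * q.1) * c.2 * d.1 * S d.2 * S p.2).
  apply: eq_bigr => p _; rewrite exchange_big; apply: eq_bigr => c _.
  rewrite (coassoc hH (G := fun a b c' => S (c.1 * a) * (c.2 * b) * (S c' * S p.2))); last by lint.
  by apply: eq_bigr => q _; apply: eq_bigr => d _; rewrite !mulrA.
under eq_bigr => p _ do under eq_bigr => c _ do under eq_bigr => q _ do rewrite (aprc hH).
transitivity (\sum_(p <- Delta x) \sum_(c <- Delta p.1) S (c.1 * y) * c.2 * S p.2).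
  apply: eq_bigr => p _; apply: eq_bigr => c _.
  by rewrite (cur hH (f := fun z => S (c.1 * z) * c.2 * S p.2)) //; lint.
rewrite (coassoc hH (G := fun a b c' => S (a * y) * b * S c')); last by lint.
under eq_bigr => p _ do rewrite (aprc1 hH).
by rewrite (cur hH (f := fun z => S (z * y))) //; lint.
Qed.

Lemma S1 : S 1 = 1.
Proof.
transitivity (\sum_(p <- [:: (1, 1)]) S p.1 * p.2); first by rewrite big_seq1 /= mulr1.
rewrite -(teq2_sum (D1 hH) (G := fun p => S p.1 * p.2)); last by lint.
by rewrite (apl0 hH) (eps1 hH) scale1r.
Qed.

Lemma DS W (G : H * H -> W) x : bilinear_map (fun a b => G (a, b)) ->
  \sum_(q <- Delta (S x)) G q = \sum_(p <- Delta x) G (S p.2, S p.1).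
Proof.
move=> hb; have lS := linS hH; symmetry.
rewrite -(cul hH (f := fun z => \sum_(p <- Delta z) G (S p.2, S p.1)) x); last by lint.
transitivity (\sum_(a <- Delta x) \sum_(b <- Delta a.1) \sum_(p <- Delta a.2)
   \sum_(t <- Delta (S b.1)) \sum_(e <- Delta b.2) G (t.1 * e.1 * S p.2, t.2 * e.2 * S p.1)).
  apply: eq_bigr => a _; rewrite scaler_sumr exchange_big; apply: eq_bigr => p _.
  transitivity (eps a.1 *: \sum_(t <- Delta 1) G (t.1 * S p.2, t.2 * S p.1)).
    rewrite (teq2_sum (D1 hH) (G := fun t => G (t.1 * S p.2, t.2 * S p.1))); last by lint.
    by rewrite big_seq1 /= !mul1r.
  rewrite -(apl hH (f := fun z => \sum_(t <- Delta z) G (t.1 * S p.2, t.2 * S p.1))); last by lint.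
  apply: eq_bigr => b _.
  by rewrite (teq2_sum (Dmul hH _ _)) ?sum_tmul2 //; lint.
transitivity (\sum_(a <- Delta x) \sum_(b <- Delta a.2) \sum_(p <- Delta b.2)
   \sum_(t <- Delta (S a.1)) \sum_(e <- Delta b.1) G (t.1 * e.1 * S p.2, t.2 * e.2 * S p.1)).
  by rewrite (coassoc hH (G := fun u v w => \sum_(p <- Delta w) \sum_(t <- Delta (S u))
       \sum_(e <- Delta v) G (t.1 * e.1 * S p.2, t.2 * e.2 * S p.1))) //; lint.
transitivity (\sum_(a <- Delta x) \sum_(b <- Delta a.2) \sum_(e <- Delta b.2) \sum_(p <- Delta e.2)
   \sum_(t <- Delta (S a.1)) G (t.1 * b.1 * S p.2, t.2 * e.1 * S p.1)).
  apply: eq_bigr => a _.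
  transitivity (\sum_(b <- Delta a.2) \sum_(e <- Delta b.1) \sum_(p <- Delta b.2)
     \sum_(t <- Delta (S a.1)) G (t.1 * e.1 * S p.2, t.2 * e.2 * S p.1)).
    apply: eq_bigr => b _; under eq_bigr => p _ do rewrite exchange_big.
    by rewrite exchange_big.
  by rewrite (coassoc hH (G := fun u v w => \sum_(p <- Delta w)
       \sum_(t <- Delta (S a.1)) G (t.1 * u * S p.2, t.2 * v * S p.1))) //; lint.
transitivity (\sum_(a <- Delta x) \sum_(b <- Delta a.2) \sum_(e <- Delta b.2) \sum_(p <- Delta e.1)
   \sum_(t <- Delta (S a.1)) G (t.1 * b.1 * S e.2, t.2 * p.1 * S p.2)).
  apply: eq_bigr => a _; apply: eq_bigr => b _.
  by rewrite -(coassoc hH (G := fun u v w => 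
       \sum_(t <- Delta (S a.1)) G (t.1 * b.1 * S w, t.2 * u * S v))) //; lint.
transitivity (\sum_(a <- Delta x) \sum_(b <- Delta a.2) \sum_(e <- Delta b.2)
   \sum_(t <- Delta (S a.1)) eps e.1 *: G (t.1 * b.1 * S e.2, t.2)).
  apply: eq_bigr => a _; apply: eq_bigr => b _; apply: eq_bigr => e _.
  rewrite exchange_big; apply: eq_bigr => t _.
  transitivity (\sum_(p <- Delta e.1) (fun z => G (t.1 * b.1 * S e.2, t.2 * z)) (p.1 * S p.2)).
    by apply: eq_bigr => p _; rewrite mulrA.
  by rewrite (apr hH (f := fun z => G (t.1 * b.1 * S e.2, t.2 * z))) ?mulr1 //; lint.
transitivity (\sum_(a <- Delta x) \sum_(b <- Delta a.2)
   \sum_(t <- Delta (S a.1)) G (t.1 * b.1 * S b.2, t.2)).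
  apply: eq_bigr => a _; apply: eq_bigr => b _.
  rewrite exchange_big; apply: eq_bigr => t _.
  by rewrite (cul hH (f := fun z => G (t.1 * b.1 * S z, t.2))) //; lint.
transitivity (\sum_(a <- Delta x) \sum_(t <- Delta (S a.1)) eps a.2 *: G (t.1, t.2)).
  apply: eq_bigr => a _.
  rewrite exchange_big; apply: eq_bigr => t _.
  transitivity (\sum_(b <- Delta a.2) (fun z => G (t.1 * z, t.2)) (b.1 * S b.2)).
    by apply: eq_bigr => b _; rewrite mulrA.
  by rewrite (apr hH (f := fun z => G (t.1 * z, t.2))) ?mulr1 //; lint.
transitivity (\sum_(a <- Delta x) eps a.2 *: \sum_(t <- Delta (S a.1)) G t).
  apply: eq_bigr => a _; rewrite scaler_sumr; apply: eq_bigr => -[t1 t2] _ //.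
by rewrite (cur hH (f := fun z => \sum_(t <- Delta (S z)) G t)) //; lint.
Qed.

End Anti.


Section R.
Variables (k : fieldType) (H : algType k).
Implicit Types W : lmodType k.
Variables (Delta : H -> seq (H * H)) (eps : H -> k) (S Sinv : H -> H) (Rm : seq (H * H)).
Hypothesis hH : is_hopf Delta eps S.
Hypothesis SK : cancel S Sinv.
Hypothesis SiK : cancel Sinv S.
Hypothesis hR : is_semiquasitriangular Delta S Rm.

Let lS := linS hH.

Lemma linSi : lin Sinv.
Proof. by move=> a x y; apply: (can_inj SK); rewrite lS !SiK. Qed.
Let lSi := linSi.

Lemma Si_mul x y : Sinv (x * y) = Sinv y * Sinv x.
Proof. by apply: (can_inj SK); rewrite (S_mul hH) !SiK. Qed.

Lemma Si1 : Sinv 1 = 1.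
Proof. by apply: (can_inj SK); rewrite SiK (S1 hH). Qed.

Lemma Rinv : exists Ri : seq (H * H),
      teq2 (tmul2 Rm Ri) [:: (1, 1)] /\ teq2 (tmul2 Ri Rm) [:: (1, 1)].
Proof. by case: hR => [hh _]; apply: hh. Qed.
Lemma Rax1 : teq3 [seq (c.1, c.2, r.2) | r <- Rm, c <- Delta r.1]
       [seq (r.1, s.1, r.2 * s.2) | r <- Rm, s <- Rm].
Proof. by case: hR => [_ [hh _]]; apply: hh. Qed.
Lemma Rax2 : teq3 [seq (r.1, c.1, c.2) | r <- Rm, c <- Delta r.2]
       [seq (r.1 * s.1, s.2, r.2) | r <- Rm, s <- Rm].
Proof. by case: hR => [_ [_ [hh _]]]; apply: hh. Qed.
Lemma Rax3 : teq3 (flatten [seq [seq (r.1, c.2 * s.1, c.1 * s.2) | c <- Delta r.2, s <- Rm]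
                | r <- Rm])
       (flatten [seq [seq (r.1, s.1 * c.1, s.2 * c.2) | c <- Delta r.2, s <- Rm]
                | r <- Rm]).
Proof. by case: hR => [_ [_ [_ [hh _]]]]; apply: hh. Qed.
Lemma Rax4 : teq3 (flatten [seq [seq (c.2 * s.1, c.1 * s.2, r.2) | c <- Delta r.1, s <- Rm]
                | r <- Rm])
       (flatten [seq [seq (s.1 * c.1, s.2 * c.2, r.2) | c <- Delta r.1, s <- Rm]
                | r <- Rm]).
Proof. by case: hR => [_ [_ [_ [_ [hh _]]]]]; apply: hh. Qed.
Lemma Rax5 h : exists t : seq (H * H),
      teq2 (nu Delta S Rm h) t /\ (forall p, p \in t -> in_centre p.2).
Proof. by case: hR => [_ [_ [_ [_ [_ [hh _]]]]]]; apply: hh. Qed.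
Lemma Rax6 h : teq2 (nu Delta S Rm h) (nu' Delta S Rm h).
Proof. by case: hR => [_ [_ [_ [_ [_ [_ hh]]]]]]; apply: hh. Qed.

Lemma Rax1s W (G : H -> H -> H -> W) : trilinear_map G ->
  \sum_(r <- Rm) \sum_(c <- Delta r.1) G c.1 c.2 r.2 =
  \sum_(r <- Rm) \sum_(s <- Rm) G r.1 s.1 (r.2 * s.2).
Proof. by move=> hG; have := Rax1 hG; rewrite !big_allpairs_dep. Qed.
Lemma Rax2s W (G : H -> H -> H -> W) : trilinear_map G ->
  \sum_(r <- Rm) \sum_(c <- Delta r.2) G r.1 c.1 c.2 =
  \sum_(r <- Rm) \sum_(s <- Rm) G (r.1 * s.1) s.2 r.2.
Proof. by move=> hG; have := Rax2 hG; rewrite !big_allpairs_dep. Qed.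

Lemma epsR1 : \sum_(r <- Rm) eps r.1 *: r.2 = 1.
Proof.
set x := \sum_(r <- Rm) eps r.1 *: r.2.
have A W (b : H -> H -> W) : bilinear_map b ->
    \sum_(r <- Rm) b r.1 r.2 = \sum_(s <- Rm) b s.1 (x * s.2).
  move=> hb.
  transitivity (\sum_(r <- Rm) \sum_(c <- Delta r.1) b (eps c.1 *: c.2) r.2).
    apply: eq_bigr => r _.
    rewrite -(cul hH (f := fun z => b z r.2) r.1); last by lint.
    by apply: eq_bigr => c _; rewrite bZl.
  rewrite (Rax1s (G := fun p q Z => b (eps p *: q) Z)); last by lint.
  rewrite exchange_big; apply: eq_bigr => s _.
  rewrite /x mulr_suml bsumr //; apply: eq_bigr => r _.
  by rewrite bZl // -scalerAl bZr.
have [Ri [e1 e2]] := Rinv.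
have B W (b : H -> H -> W) : bilinear_map b ->
    \sum_(r <- Rm) \sum_(q <- Ri) b (r.1 * q.1) (r.2 * q.2) = b 1 1.
  move=> hb; rewrite -(sum_tmul2 _ _ (fun p => b p.1 p.2)) (teq2_sum e1 (G := fun p => b p.1 p.2)) ?big_seq1 //; lint.
pose b0 := fun p q : H => eps p *: q.
have hb0 : bilinear_map b0 by rewrite /b0; lint.
have := B _ _ hb0.
rewrite (A _ (fun P Z => \sum_(q <- Ri) b0 (P * q.1) (Z * q.2))); last by lint.
under eq_bigr => s _ do under eq_bigr => q _ do rewrite -mulrA.
rewrite (B _ (fun P Z => b0 P (x * Z))); last by lint.
by rewrite /b0 (eps1 hH) !scale1r mulr1 => ->.
Qed.

Lemma epsR2 : \sum_(r <- Rm) eps r.2 *: r.1 = 1.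
Proof.
set y := \sum_(r <- Rm) eps r.2 *: r.1.
have A W (b : H -> H -> W) : bilinear_map b ->
    \sum_(r <- Rm) b r.1 r.2 = \sum_(r <- Rm) b (r.1 * y) r.2.
  move=> hb.
  transitivity (\sum_(r <- Rm) \sum_(c <- Delta r.2) b r.1 (eps c.1 *: c.2)).
    apply: eq_bigr => r _.
    rewrite -(cul hH (f := fun z => b r.1 z) r.2); last by lint.
    by apply: eq_bigr => c _; rewrite bZr.
  rewrite (Rax2s (G := fun p q Z => b p (eps q *: Z))); last by lint.
  apply: eq_bigr => r _.
  rewrite /y mulr_sumr bsuml //; apply: eq_bigr => s _.
  by rewrite bZr // -scalerAr bZl.
have [Ri [e1 e2]] := Rinv.
have B W (b : H -> H -> W) : bilinear_map b ->
    \sum_(q <- Ri) \sum_(r <- Rm) b (q.1 * r.1) (q.2 * r.2) = b 1 1.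
  move=> hb; rewrite -(sum_tmul2 _ _ (fun p => b p.1 p.2)) (teq2_sum e2 (G := fun p => b p.1 p.2)) ?big_seq1 //; lint.
pose b0 := fun p q : H => eps q *: p.
have hb0 : bilinear_map b0 by rewrite /b0; lint.
have := B _ _ hb0.
rewrite exchange_big (A _ (fun P Z => \sum_(q <- Ri) b0 (q.1 * P) (q.2 * Z))); last by lint.
under eq_bigr => s _ do under eq_bigr => q _ do rewrite mulrA.
rewrite exchange_big (B _ (fun P Z => b0 (P * y) Z)); last by lint.
by rewrite /b0 (eps1 hH) !scale1r mul1r => ->.
Qed.

Lemma RA W (b : H -> H -> W) : bilinear_map b ->
  \sum_(r <- Rm) \sum_(s <- Rm) b (r.1 * S s.1) (r.2 * s.2) = b 1 1.
Proof.
move=> hb; rewrite -(Rax1s (G := fun p q Z => b (p * S q) Z)); last by lint.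
transitivity (\sum_(r <- Rm) eps r.1 *: b 1 r.2).
  by apply: eq_bigr => r _; rewrite (apr hH (f := fun z => b z r.2)) //; lint.
rewrite -[X in b 1 X]epsR1 bsumr //; apply: eq_bigr => r _; by rewrite bZr.
Qed.

Lemma BR W (b : H -> H -> W) : bilinear_map b ->
  \sum_(r <- Rm) \sum_(s <- Rm) b (r.1 * s.1) (Sinv r.2 * s.2) = b 1 1.
Proof.
move=> hb; rewrite -(Rax2s (G := fun P q Z => b P (Sinv Z * q))); last by lint.
transitivity (\sum_(r <- Rm) eps r.2 *: b r.1 1).
  apply: eq_bigr => r _.
  transitivity (\sum_(c <- Delta r.2) (fun z => b r.1 (Sinv z)) (S c.1 * c.2)).
    by apply: eq_bigr => c _; rewrite Si_mul SK.
  by rewrite (apl hH (f := fun z => b r.1 (Sinv z))) ?Si1 //; lint.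
rewrite -[X in b X 1]epsR2 bsuml //; apply: eq_bigr => r _; by rewrite bZl.
Qed.

Lemma BA W (b : H -> H -> W) : bilinear_map b ->
  \sum_(t <- Rm) b t.1 (Sinv t.2) = \sum_(s <- Rm) b (S s.1) s.2.
Proof.
move=> hb.
transitivity (\sum_(t <- Rm) b (t.1 * 1) (Sinv t.2 * 1)).
  by apply: eq_bigr => t _; rewrite !mulr1.
rewrite -(RA (b := fun P Z => \sum_(t <- Rm) b (t.1 * P) (Sinv t.2 * Z))); last by lint.
transitivity (\sum_(t <- Rm) \sum_(r <- Rm) \sum_(s <- Rm)
   b (t.1 * r.1 * S s.1) (Sinv t.2 * r.2 * s.2)).
  under eq_bigr => r _ do rewrite exchange_big.
  rewrite exchange_big; apply: eq_bigr => t _; apply: eq_bigr => r _; apply: eq_bigr => s _.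
  by rewrite !mulrA.
rewrite (BR (b := fun P Z => \sum_(s <- Rm) b (P * S s.1) (Z * s.2))); last by lint.
by apply: eq_bigr => s _; rewrite !mul1r.
Qed.

Lemma SSR W (b : H -> H -> W) : bilinear_map b ->
  \sum_(r <- Rm) b (S r.1) (S r.2) = \sum_(r <- Rm) b r.1 r.2.
Proof.
move=> hb; have := BA (b := fun p q => b p (S q)).
rewrite /=; under eq_bigr => t _ do rewrite SiK.
by move=> <- //; lint.
Qed.

Lemma Rax3s W (G : H -> H -> H -> W) : trilinear_map G ->
  \sum_(r <- Rm) \sum_(c <- Delta r.2) \sum_(s <- Rm) G r.1 (c.2 * s.1) (c.1 * s.2) =
  \sum_(r <- Rm) \sum_(c <- Delta r.2) \sum_(s <- Rm) G r.1 (s.1 * c.1) (s.2 * c.2).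
Proof.
move=> hG; have := Rax3 hG; rewrite !big_flatten /= !big_map.
by under eq_bigr => r _ do rewrite big_allpairs_dep; under [in RHS]eq_bigr => r _ do rewrite big_allpairs_dep.
Qed.
Lemma Rax4s W (G : H -> H -> H -> W) : trilinear_map G ->
  \sum_(r <- Rm) \sum_(c <- Delta r.1) \sum_(s <- Rm) G (c.2 * s.1) (c.1 * s.2) r.2 =
  \sum_(r <- Rm) \sum_(c <- Delta r.1) \sum_(s <- Rm) G (s.1 * c.1) (s.2 * c.2) r.2.
Proof.
move=> hG; have := Rax4 hG; rewrite !big_flatten /= !big_map.
by under eq_bigr => r _ do rewrite big_allpairs_dep; under [in RHS]eq_bigr => r _ do rewrite big_allpairs_dep.
Qed.

Lemma SSR' W (F : H -> H -> W) : bilinear_map F ->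
  \sum_(r <- Rm) F r.1 (S r.2) = \sum_(r <- Rm) F (Sinv r.1) r.2.
Proof.
move=> hb; rewrite -(SSR (b := fun p q => F (Sinv p) q)); last by lint.
by apply: eq_bigr => r _; rewrite SK.
Qed.

Local Notation u := (drinfeld S Rm).

Lemma U1 : \sum_(r <- Rm) r.2 * u * r.1 = 1.
Proof.
transitivity (\sum_(r <- Rm) \sum_(s <- Rm) r.2 * S s.2 * s.1 * r.1).
  apply: eq_bigr => r _; rewrite /drinfeld mulr_sumr mulr_suml.
  by apply: eq_bigr => s _; rewrite !mulrA.
transitivity (\sum_(r <- Rm) \sum_(s <- Rm) r.2 * s.2 * Sinv s.1 * r.1).
  apply: eq_bigr => r _.
  by rewrite (SSR' (F := fun p q => r.2 * q * p * r.1)) //; lint.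
rewrite -(Rax1s (G := fun p q Z => Z * Sinv q * p)); last by lint.
transitivity (\sum_(r <- Rm) \sum_(c <- Delta r.1) (fun z => r.2 * Sinv z) (S c.1 * c.2)).
  apply: eq_bigr => r _; apply: eq_bigr => c _ /=.
  by rewrite Si_mul SK !mulrA.
transitivity (\sum_(r <- Rm) eps r.1 *: r.2).
  apply: eq_bigr => r _; rewrite (apl hH (f := fun z => r.2 * Sinv z)) ?Si1 ?mulr1 //; lint.
exact: epsR1.
Qed.

Lemma U2 : S (S u) = u.
Proof.
rewrite /drinfeld !(lin_sum _ _ lS).
transitivity (\sum_(r <- Rm) (fun p q => S (S q) * S p) (S r.1) (S r.2)).
  by apply: eq_bigr => r _; rewrite !(S_mul hH).
rewrite (SSR (b := fun p q => S (S q) * S p)) /=; last by lint.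
rewrite -(SSR (b := fun p q => S q * p)) /=; last by lint.
by [].
Qed.

Lemma ux x : u * x =
  \sum_(p <- Delta x) \sum_(c <- Delta p.1) S (S p.2) * S c.2 * u * c.1.
Proof.
rewrite (coassoc hH (G := fun a b c => S (S c) * S b * u * a)) /=; last by lint.
transitivity (\sum_(p <- Delta x) eps p.2 *: (u * p.1)).
  by rewrite (cur hH (f := fun z => u * z)) //; lint.
apply: eq_bigr => p _.
transitivity (\sum_(c <- Delta p.2) (fun z => S z * u * p.1) (c.1 * S c.2)).
  by rewrite (apr hH (f := fun z => S z * u * p.1)) ?(S1 hH) ?mul1r //; lint.
by apply: eq_bigr => c _; rewrite (S_mul hH).
Qed.

Lemma Lleg W (b : H -> H -> W) : bilinear_map b ->
  \sum_(r <- Rm) b (u * r.1) r.2 = \sum_(r <- Rm) b (S (S r.1) * u) r.2.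
Proof.
move=> hb.
transitivity (\sum_(r <- Rm) \sum_(p <- Delta r.1) \sum_(c <- Delta p.1) \sum_(s <- Rm)
   b (S (S p.2) * S (s.2 * c.2) * s.1 * c.1) r.2).
  apply: eq_bigr => r _; rewrite ux bsuml //; apply: eq_bigr => p _.
  rewrite bsuml //; apply: eq_bigr => c _.
  rewrite /drinfeld mulr_sumr mulr_suml bsuml //; apply: eq_bigr => s _.
  by rewrite (S_mul hH) !mulrA.
rewrite (Rax1s (G := fun P Q Z => \sum_(c <- Delta P) \sum_(s <- Rm)
   b (S (S Q) * S (s.2 * c.2) * s.1 * c.1) Z)); last by lint.
transitivity (\sum_(r <- Rm) \sum_(c <- Delta r.1) \sum_(s <- Rm) \sum_(t <- Rm)
   b (S (S t.1) * S (s.2 * c.2) * (s.1 * c.1)) (r.2 * t.2)).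
  apply: eq_bigr => r _; rewrite exchange_big; apply: eq_bigr => c _.
  rewrite exchange_big; apply: eq_bigr => s _; apply: eq_bigr => t _.
  by rewrite !mulrA.
rewrite -(Rax4s (G := fun P Q Z => \sum_(t <- Rm) b (S (S t.1) * S Q * P) (Z * t.2))); last by lint.
transitivity (\sum_(r <- Rm) eps r.1 *: \sum_(s <- Rm) \sum_(t <- Rm)
   b (S (S t.1) * S s.2 * s.1) (r.2 * t.2)).
  apply: eq_bigr => r _.
  transitivity (\sum_(c <- Delta r.1) (fun z => \sum_(s <- Rm) \sum_(t <- Rm)
     b (S (S t.1) * S s.2 * z * s.1) (r.2 * t.2)) (S c.1 * c.2)).
    apply: eq_bigr => c _; apply: eq_bigr => s _; apply: eq_bigr => t _.
    by rewrite (S_mul hH) !mulrA.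
  rewrite (apl hH (f := fun z => \sum_(s <- Rm) \sum_(t <- Rm)
     b (S (S t.1) * S s.2 * z * s.1) (r.2 * t.2))) /=; last by lint.
  by under eq_bigr => s _ do under eq_bigr => t _ do rewrite mulr1.
symmetry.
transitivity (\sum_(t <- Rm) \sum_(r <- Rm) \sum_(s <- Rm)
   eps r.1 *: b (S (S t.1) * S s.2 * s.1) (r.2 * t.2)).
  apply: eq_bigr => t _.
  rewrite -{1}[t.2]mul1r -epsR1 mulr_suml bsumr //; apply: eq_bigr => r _.
  rewrite /drinfeld mulr_sumr bsuml //; apply: eq_bigr => s _.
  by rewrite -scalerAl bZr // mulrA.
rewrite exchange_big; apply: eq_bigr => r _.
rewrite scaler_sumr exchange_big; apply: eq_bigr => s _.
by rewrite scaler_sumr.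
Qed.

Lemma Rleg W (b : H -> H -> W) : bilinear_map b ->
  \sum_(r <- Rm) b r.1 (u * r.2) = \sum_(r <- Rm) b r.1 (S (S r.2) * u).
Proof.
move=> hb.
transitivity (\sum_(r <- Rm) \sum_(p <- Delta r.2) \sum_(c <- Delta p.1) \sum_(s <- Rm)
   b r.1 (S (S p.2) * S (s.2 * c.2) * s.1 * c.1)).
  apply: eq_bigr => r _; rewrite ux bsumr //; apply: eq_bigr => p _.
  rewrite bsumr //; apply: eq_bigr => c _.
  rewrite /drinfeld mulr_sumr mulr_suml bsumr //; apply: eq_bigr => s _.
  by rewrite (S_mul hH) !mulrA.
rewrite (Rax2s (G := fun P Q Z => \sum_(c <- Delta Q) \sum_(s <- Rm)
   b P (S (S Z) * S (s.2 * c.2) * s.1 * c.1))); last by lint.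
transitivity (\sum_(t <- Rm) \sum_(c <- Delta t.2) \sum_(s <- Rm) \sum_(r <- Rm)
   b (r.1 * t.1) (S (S r.2) * S (s.2 * c.2) * (s.1 * c.1))).
  rewrite exchange_big; apply: eq_bigr => t _.
  rewrite exchange_big; apply: eq_bigr => c _.
  rewrite exchange_big; apply: eq_bigr => s _; apply: eq_bigr => r _.
  by rewrite !mulrA.
rewrite -(Rax3s (G := fun P Q1 Q2 => \sum_(r <- Rm) b (r.1 * P) (S (S r.2) * S Q2 * Q1))); last by lint.
transitivity (\sum_(t <- Rm) eps t.2 *: \sum_(s <- Rm) \sum_(r <- Rm)
   b (r.1 * t.1) (S (S r.2) * S s.2 * s.1)).
  apply: eq_bigr => t _.
  transitivity (\sum_(c <- Delta t.2) (fun z => \sum_(s <- Rm) \sum_(r <- Rm)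
     b (r.1 * t.1) (S (S r.2) * S s.2 * z * s.1)) (S c.1 * c.2)).
    apply: eq_bigr => c _; apply: eq_bigr => s _; apply: eq_bigr => r _.
    by rewrite (S_mul hH) !mulrA.
  rewrite (apl hH (f := fun z => \sum_(s <- Rm) \sum_(r <- Rm)
     b (r.1 * t.1) (S (S r.2) * S s.2 * z * s.1))) /=; last by lint.
  by under eq_bigr => s _ do under eq_bigr => r _ do rewrite mulr1.
symmetry.
transitivity (\sum_(r <- Rm) \sum_(t <- Rm) \sum_(s <- Rm)
   eps t.2 *: b (r.1 * t.1) (S (S r.2) * S s.2 * s.1)).
  apply: eq_bigr => r _.
  rewrite -{1}[r.1]mulr1 -epsR2 mulr_sumr bsuml //; apply: eq_bigr => t _.
  rewrite /drinfeld mulr_sumr bsumr //; apply: eq_bigr => s _.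
  by rewrite -scalerAr bZl // mulrA.
rewrite exchange_big; apply: eq_bigr => t _.
rewrite scaler_sumr exchange_big; apply: eq_bigr => s _.
by rewrite scaler_sumr.
Qed.

Lemma nu_sum W (F : H * H -> W) h : \sum_(p <- nu Delta S Rm h) F p =
  \sum_(r <- Rm) \sum_(d <- Delta h) \sum_(c <- Delta d.1) \sum_(s <- Rm)
     F (r.2 * c.2 * s.2, S c.1 * S r.1 * d.2 * s.1).
Proof.
rewrite /nu big_flatten /= big_map; apply: eq_bigr => r _.
rewrite big_allpairs_dep /Delta3 big_allpairs_dep; apply: eq_bigr => d _.
by apply: eq_bigr => c _.
Qed.

Lemma nu'_sum W (F : H * H -> W) h : \sum_(p <- nu' Delta S Rm h) F p =
  \sum_(r <- Rm) \sum_(d <- Delta h) \sum_(c <- Delta d.1) \sum_(s <- Rm)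
     F (r.1 * c.2 * s.1, S s.2 * S c.1 * r.2 * d.2).
Proof.
rewrite /nu' big_flatten /= big_map; apply: eq_bigr => r _.
rewrite big_allpairs_dep /Delta3 big_allpairs_dep; apply: eq_bigr => d _.
by apply: eq_bigr => c _.
Qed.

Definition Gp x := \sum_(p <- nu Delta S Rm x) p.2 * S p.1.
Definition Gm x := \sum_(p <- nu Delta S Rm x) S p.1 * p.2.

Lemma linGp : lin Gp.
Proof.
have e x : Gp x = \sum_(r <- Rm) \sum_(d <- Delta x) \sum_(c <- Delta d.1) \sum_(s <- Rm)
     (S c.1 * S r.1 * d.2 * s.1) * S (r.2 * c.2 * s.2).
  by rewrite /Gp nu_sum.
have : lin (fun x => \sum_(r <- Rm) \sum_(d <- Delta x) \sum_(c <- Delta d.1) \sum_(s <- Rm)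
     (S c.1 * S r.1 * d.2 * s.1) * S (r.2 * c.2 * s.2)) by lint.
by move=> hl a x y; rewrite !e hl.
Qed.
Lemma linGm : lin Gm.
Proof.
have e x : Gm x = \sum_(r <- Rm) \sum_(d <- Delta x) \sum_(c <- Delta d.1) \sum_(s <- Rm)
     S (r.2 * c.2 * s.2) * (S c.1 * S r.1 * d.2 * s.1).
  by rewrite /Gm nu_sum.
have : lin (fun x => \sum_(r <- Rm) \sum_(d <- Delta x) \sum_(c <- Delta d.1) \sum_(s <- Rm)
     S (r.2 * c.2 * s.2) * (S c.1 * S r.1 * d.2 * s.1)) by lint.
by move=> hl a x y; rewrite !e hl.
Qed.

Definition winv := \sum_(r <- Rm) r.2 * S (S r.1).

Lemma wu : winv * u = 1.
Proof.
rewrite /winv mulr_suml -U1; symmetry.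
transitivity (\sum_(r <- Rm) r.2 * (u * r.1)).
  by apply: eq_bigr => r _; rewrite mulrA.
rewrite (Lleg (b := fun p q : H => q * p)) /=; last by lint.
by apply: eq_bigr => r _; rewrite mulrA.
Qed.

Lemma uw : u * winv = 1.
Proof.
rewrite /winv mulr_sumr.
transitivity (\sum_(r <- Rm) (u * r.2) * S (S r.1)).
  by apply: eq_bigr => r _; rewrite mulrA.
rewrite (Rleg (b := fun p q : H => q * S (S p))) /=; last by lint.
transitivity (S (S (\sum_(r <- Rm) r.2 * u * r.1))).
  rewrite !(lin_sum _ _ lS); apply: eq_bigr => r _.
  by rewrite !(S_mul hH) U2.
by rewrite U1 (S1 hH) (S1 hH).
Qed.

Lemma A1 y : Tmap Delta S Rm y =
  \sum_(d <- Delta y) \sum_(c <- Delta d.1) c.1 * Gp c.2 * d.2.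
Proof.
have lGp := linGp.
symmetry.
rewrite (coassoc hH (G := fun a b c => a * Gp b * c)) /=; last by lint.
transitivity (\sum_(d <- Delta y) \sum_(c <- Delta d.2) \sum_(e <- Delta c.1)
   \sum_(f <- Delta e.1) \sum_(r <- Rm) \sum_(s <- Rm)
   d.1 * (S f.1 * S r.1 * e.2 * s.1 * S (r.2 * f.2 * s.2)) * c.2).
  apply: eq_bigr => d _; apply: eq_bigr => c _.
  rewrite /Gp nu_sum mulr_sumlr.
  under eq_bigr => r _ do rewrite mulr_sumlr.
  rewrite exchange_big; apply: eq_bigr => e _.
  under eq_bigr => r _ do rewrite mulr_sumlr.
  rewrite exchange_big; apply: eq_bigr => f _.
  by under eq_bigr => r _ do rewrite mulr_sumlr.
transitivity (\sum_(d <- Delta y) \sum_(c <- Delta d.2) \sum_(e <- Delta c.1)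
   \sum_(f <- Delta e.2) \sum_(r <- Rm) \sum_(s <- Rm)
   d.1 * (S e.1 * S r.1 * f.2 * s.1 * S (r.2 * f.1 * s.2)) * c.2).
  apply: eq_bigr => d _; apply: eq_bigr => c _.
  by rewrite (coassoc hH (G := fun a b e2 => \sum_(r <- Rm) \sum_(s <- Rm)
     d.1 * (S a * S r.1 * e2 * s.1 * S (r.2 * b * s.2)) * c.2)) //; lint.
transitivity (\sum_(d <- Delta y) \sum_(c <- Delta d.2) \sum_(e <- Delta c.2)
   \sum_(f <- Delta e.1) \sum_(r <- Rm) \sum_(s <- Rm)
   d.1 * (S c.1 * S r.1 * f.2 * s.1 * S (r.2 * f.1 * s.2)) * e.2).
  apply: eq_bigr => d _.
  by rewrite (coassoc hH (G := fun P Q Z => \sum_(f <- Delta Q) \sum_(r <- Rm) \sum_(s <- Rm)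
     d.1 * (S P * S r.1 * f.2 * s.1 * S (r.2 * f.1 * s.2)) * Z)) //; lint.
rewrite -(coassoc hH (G := fun A P Z => \sum_(e <- Delta Z) \sum_(f <- Delta e.1)
     \sum_(r <- Rm) \sum_(s <- Rm)
     A * (S P * S r.1 * f.2 * s.1 * S (r.2 * f.1 * s.2)) * e.2)) /=; last by lint.
transitivity (\sum_(d <- Delta y) eps d.1 *: \sum_(e <- Delta d.2) \sum_(f <- Delta e.1)
     \sum_(r <- Rm) \sum_(s <- Rm) (S r.1 * f.2 * s.1 * S (r.2 * f.1 * s.2)) * e.2).
  apply: eq_bigr => d _.
  transitivity (\sum_(c <- Delta d.1) (fun z => z * \sum_(e <- Delta d.2) \sum_(f <- Delta e.1)
     \sum_(r <- Rm) \sum_(s <- Rm) (S r.1 * f.2 * s.1 * S (r.2 * f.1 * s.2)) * e.2)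
     (c.1 * S c.2)).
    apply: eq_bigr => c _; rewrite mulr_sumr; apply: eq_bigr => e _.
    rewrite mulr_sumr; apply: eq_bigr => f _.
    rewrite mulr_sumr; apply: eq_bigr => r _.
    by rewrite mulr_sumr; apply: eq_bigr => s _; rewrite !mulrA.
  by rewrite (apr hH (f := fun z => z * \sum_(e <- Delta d.2) \sum_(f <- Delta e.1)
     \sum_(r <- Rm) \sum_(s <- Rm) (S r.1 * f.2 * s.1 * S (r.2 * f.1 * s.2)) * e.2)) ?mul1r //; lint.
rewrite (cul hH (f := fun z => \sum_(e <- Delta z) \sum_(f <- Delta e.1)
     \sum_(r <- Rm) \sum_(s <- Rm) (S r.1 * f.2 * s.1 * S (r.2 * f.1 * s.2)) * e.2)); last by lint.
rewrite /Tmap /mu (teq2_sum (Rax6 y) (G := fun p => p.1 * p.2)); last by lint.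
rewrite nu'_sum [in RHS]exchange_big; apply: eq_bigr => e _.
rewrite [in RHS]exchange_big; apply: eq_bigr => f _.
transitivity (\sum_(r <- Rm) (fun P Q => \sum_(s <- Rm) (P * f.2 * s.1 * (S s.2 * S f.1)) * (Q * e.2))
   (S r.1) (S r.2)).
  apply: eq_bigr => r _; apply: eq_bigr => s _.
  by rewrite !(S_mul hH) !mulrA.
rewrite (SSR (b := fun P Q => \sum_(s <- Rm) (P * f.2 * s.1 * (S s.2 * S f.1)) * (Q * e.2))) /=; last by lint.
apply: eq_bigr => r _; apply: eq_bigr => s _.
by rewrite !mulrA.
Qed.

Lemma cent_sum W (F F' : H * H -> W) x :
  bilinear_map (fun a b => F (a, b)) -> bilinear_map (fun a b => F' (a, b)) ->
  (forall a z, in_centre z -> F (a, z) = F' (a, z)) ->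
  \sum_(p <- nu Delta S Rm x) F p = \sum_(p <- nu Delta S Rm x) F' p.
Proof.
move=> hF hF' hc; have [t [et ct]] := Rax5 x.
rewrite (teq2_sum et hF) (teq2_sum et hF'); apply: eq_big_seq => -[a z] /ct /= zc.
exact: hc.
Qed.

Lemma A2 x : Gp x = Gm x.
Proof. by apply: cent_sum => [||a z /= zc]; [lint | lint | rewrite zc]. Qed.

Lemma Si_ap h : \sum_(c <- Delta h) c.2 * Sinv c.1 = eps h *: 1.
Proof.
rewrite -Si1 -(linZ lSi) -(apr0 hH) (lin_sum _ _ lSi); apply: eq_bigr => c _.
by rewrite Si_mul SK.
Qed.

Lemma Kstar y : \sum_(d <- Delta y) \sum_(p <- nu Delta S Rm d.2) S p.1 * u * d.1 * p.2 = eps y *: u.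
Proof.
transitivity (\sum_(d <- Delta y) \sum_(e <- Delta d.2) \sum_(c <- Delta e.1)
   \sum_(r <- Rm) \sum_(s <- Rm)
   S (r.2 * c.2 * s.2) * u * d.1 * (S c.1 * S r.1 * e.2 * s.1)).
  apply: eq_bigr => d _; rewrite nu_sum exchange_big; apply: eq_bigr => e _.
  by rewrite exchange_big.
transitivity (\sum_(d <- Delta y) \sum_(e <- Delta d.2) \sum_(c <- Delta e.2)
   \sum_(r <- Rm) \sum_(s <- Rm)
   S (r.2 * c.1 * s.2) * u * d.1 * (S e.1 * S r.1 * c.2 * s.1)).
  apply: eq_bigr => d _.
  by rewrite (coassoc hH (G := fun P Q Z => \sum_(r <- Rm) \sum_(s <- Rm)
    S (r.2 * Q * s.2) * u * d.1 * (S P * S r.1 * Z * s.1))) //; lint.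
rewrite -(coassoc hH (G := fun A P Z => \sum_(c <- Delta Z) \sum_(r <- Rm) \sum_(s <- Rm)
    S (r.2 * c.1 * s.2) * u * A * (S P * S r.1 * c.2 * s.1))) /=; last by lint.
transitivity (\sum_(d <- Delta y) eps d.1 *: \sum_(c <- Delta d.2) \sum_(r <- Rm) \sum_(s <- Rm)
    S s.2 * S c.1 * S r.2 * u * S r.1 * c.2 * s.1).
  apply: eq_bigr => d _.
  transitivity (\sum_(e <- Delta d.1) (fun z => \sum_(c <- Delta d.2) \sum_(r <- Rm) \sum_(s <- Rm)
    S s.2 * S c.1 * S r.2 * u * z * S r.1 * c.2 * s.1) (e.1 * S e.2)).
    apply: eq_bigr => e _; apply: eq_bigr => c _; apply: eq_bigr => r _; apply: eq_bigr => s _.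
    by rewrite !(S_mul hH) !mulrA.
  rewrite (apr hH (f := fun z => \sum_(c <- Delta d.2) \sum_(r <- Rm) \sum_(s <- Rm)
    S s.2 * S c.1 * S r.2 * u * z * S r.1 * c.2 * s.1)) /=; last by lint.
  by congr (_ *: _); apply: eq_bigr => c _; apply: eq_bigr => r _; apply: eq_bigr => s _; rewrite mulr1.
rewrite (cul hH (f := fun z => \sum_(c <- Delta z) \sum_(r <- Rm) \sum_(s <- Rm)
    S s.2 * S c.1 * S r.2 * u * S r.1 * c.2 * s.1)); last by lint.
transitivity (\sum_(c <- Delta y) \sum_(s <- Rm) S s.2 * S c.1 * c.2 * s.1).
  apply: eq_bigr => c _; rewrite exchange_big; apply: eq_bigr => s _.
  transitivity (\sum_(q <- Rm) \sum_(r <- Rm) (fun P Z => S s.2 * S c.1 * S Z * P * c.2 * s.1)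
      (q.1 * S r.1) (q.2 * r.2)).
    rewrite [RHS]exchange_big; apply: eq_bigr => r _.
    transitivity ((S s.2 * S c.1 * S r.2) * u * (S r.1 * c.2 * s.1)); first by rewrite !mulrA.
    rewrite /drinfeld mulr_sumlr; apply: eq_bigr => q _.
    by rewrite (S_mul hH) !mulrA.
  rewrite (RA (b := fun P Z => S s.2 * S c.1 * S Z * P * c.2 * s.1)) /=; last by lint.
  by rewrite (S1 hH) !mulr1.
transitivity (\sum_(c <- Delta y) (fun z => \sum_(s <- Rm) S s.2 * z * s.1) (S c.1 * c.2)).
  by apply: eq_bigr => c _; rewrite /=; apply: eq_bigr => s _; rewrite !mulrA.
rewrite (apl hH (f := fun z => \sum_(s <- Rm) S s.2 * z * s.1)) /=; last by lint.
by congr (_ *: _); apply: eq_bigr => s _; rewrite mulr1.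
Qed.

Lemma Kss y : \sum_(d <- Delta y) Gm d.2 * u * d.1 = eps y *: u.
Proof.
rewrite -Kstar; apply: eq_bigr => d _; rewrite /Gm !mulr_suml.
apply: cent_sum => [||a z /= zc]; [lint | lint |].
by rewrite -!mulrA; congr (_ * _); rewrite -zc mulrA.
Qed.

Lemma K1 x : Gm x * u = u * Sinv x.
Proof.
have lGm := linGm.
rewrite -(cul hH (f := fun z => Gm z * u) x); last by lint.
transitivity (\sum_(p <- Delta x) \sum_(c <- Delta p.1) Gm p.2 * u * c.2 * Sinv c.1).
  apply: eq_bigr => p _; rewrite -[_ *: _]mulr1 -scalerAl scalerAr -Si_ap mulr_sumr.
  by apply: eq_bigr => c _; rewrite !mulrA.
rewrite (coassoc hH (G := fun a b c => Gm c * u * b * Sinv a)) /=; last by lint.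
transitivity (\sum_(p <- Delta x) eps p.2 *: (u * Sinv p.1)).
  by apply: eq_bigr => p _; rewrite scalerAl -Kss mulr_suml.
by rewrite (cur hH (f := fun z => u * Sinv z)) //; lint.
Qed.

Lemma Tform y : Tmap Delta S Rm y =
  \sum_(d <- Delta y) \sum_(c <- Delta d.1) c.1 * Gm c.2 * d.2.
Proof.
rewrite A1; apply: eq_bigr => d _; apply: eq_bigr => c _; by rewrite A2.
Qed.

Definition Psi (F : H -> H) y :=
  \sum_(d <- Delta y) \sum_(c <- Delta d.2) S c.2 * F c.1 * S d.1.

Lemma TS_form y : Tmap Delta S Rm (S y) = Psi (fun x => Gm (S x)) y.
Proof.
have lGm := linGm.
rewrite Tform (DS hH (G := fun p => \sum_(c <- Delta p.1) c.1 * Gm c.2 * p.2)) /=; last by lint.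
apply: eq_bigr => d _.
by rewrite (DS hH (G := fun p => p.1 * Gm p.2 * S d.1)) //; lint.
Qed.

Lemma ST_form y : S (Tmap Delta S Rm y) = Psi (fun x => S (Gm x)) y.
Proof.
have lGm := linGm.
rewrite Tform (lin_sum _ _ lS).
transitivity (\sum_(d <- Delta y) \sum_(c <- Delta d.1) S d.2 * S (Gm c.2) * S c.1).
  apply: eq_bigr => d _; rewrite (lin_sum _ _ lS); apply: eq_bigr => c _.
  by rewrite !(S_mul hH) mulrA.
by rewrite (coassoc hH (G := fun a b c => S c * S (Gm b) * S a)) //; lint.
Qed.

Lemma recon (F : H -> H) x : lin F ->
  F x = \sum_(a <- Delta x) \sum_(b <- Delta a.2) S (S b.2) * Psi F b.1 * S (S a.1).
Proof.
move=> lF; symmetry.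
transitivity (\sum_(a <- Delta x) \sum_(b <- Delta a.2) \sum_(d <- Delta b.1) \sum_(c <- Delta d.2)
   S (S b.2) * S c.2 * F c.1 * S d.1 * S (S a.1)).
  apply: eq_bigr => a _; apply: eq_bigr => b _.
  rewrite /Psi mulr_sumlr; apply: eq_bigr => d _.
  by rewrite mulr_sumlr; apply: eq_bigr => c _; rewrite !mulrA.
transitivity (\sum_(a <- Delta x) \sum_(b <- Delta a.2) \sum_(d <- Delta b.2) \sum_(c <- Delta d.1)
   S (S d.2) * S c.2 * F c.1 * S b.1 * S (S a.1)).
  apply: eq_bigr => a _.
  by rewrite (coassoc hH (G := fun P Q Z => \sum_(c <- Delta Q)
     S (S Z) * S c.2 * F c.1 * S P * S (S a.1))) //; lint.
transitivity (\sum_(a <- Delta x) \sum_(b <- Delta a.2) \sum_(d <- Delta b.2) \sum_(c <- Delta d.2)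
   S (S c.2) * S c.1 * F d.1 * S b.1 * S (S a.1)).
  apply: eq_bigr => a _; apply: eq_bigr => b _.
  by rewrite (coassoc hH (G := fun P Q Z =>
     S (S Z) * S Q * F P * S b.1 * S (S a.1))) //; lint.
transitivity (\sum_(a <- Delta x) \sum_(b <- Delta a.2) F b.2 * S b.1 * S (S a.1)).
  apply: eq_bigr => a _; apply: eq_bigr => b _.
  transitivity (\sum_(d <- Delta b.2) eps d.2 *: (F d.1 * S b.1 * S (S a.1))).
    apply: eq_bigr => d _.
    transitivity (\sum_(c <- Delta d.2) (fun z => S z * F d.1 * S b.1 * S (S a.1)) (c.1 * S c.2)).
      by apply: eq_bigr => c _; rewrite (S_mul hH).
    by rewrite (apr hH (f := fun z => S z * F d.1 * S b.1 * S (S a.1))) /= ?(S1 hH) ?mul1r //; lint.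
  by rewrite (cur hH (f := fun z => F z * S b.1 * S (S a.1))) //; lint.
rewrite -(coassoc hH (G := fun A B C => F C * S B * S (S A))) /=; last by lint.
transitivity (\sum_(a <- Delta x) eps a.1 *: F a.2).
  apply: eq_bigr => a _.
  transitivity (\sum_(b <- Delta a.1) (fun z => F a.2 * S z) (S b.1 * b.2)).
    by apply: eq_bigr => b _; rewrite /= (S_mul hH) mulrA.
  by rewrite (apl hH (f := fun z => F a.2 * S z)) /= ?(S1 hH) ?mulr1 //; lint.
by rewrite (cul hH (f := F)).
Qed.

Lemma peel (F1 F2 : H -> H) : lin F1 -> lin F2 ->
  (forall y, Psi F1 y = Psi F2 y) -> forall x, F1 x = F2 x.
Proof.
move=> l1 l2 e x; rewrite (recon x l1) (recon x l2).
by apply: eq_bigr => a _; apply: eq_bigr => b _; rewrite e.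
Qed.

Lemma nt h : mu (nu_tilde Delta S Rm Sinv h) = S (Tmap Delta S Rm (Sinv h)).
Proof.
rewrite /nu_tilde /mu big_map /Tmap /mu (lin_sum _ _ lS).
apply: cent_sum => [||a z /= zc]; [lint | lint |].
by rewrite zc (S_mul hH).
Qed.

Lemma main : [<-> in_centre (S u * u);
       forall h : H, S (Tmap Delta S Rm h) = Tmap Delta S Rm (S h);
       forall h : H, mu (nu Delta S Rm h) = mu (nu_tilde Delta S Rm Sinv h)].
Proof.
have lGm := linGm.
have GS : (forall x, Gm (S x) = S (Gm x)) -> forall h, S (Tmap Delta S Rm h) = Tmap Delta S Rm (S h).
  move=> e h; rewrite ST_form TS_form /Psi; apply: eq_bigr => d _; apply: eq_bigr => c _.
  by rewrite e.
have SG : (forall h, S (Tmap Delta S Rm h) = Tmap Delta S Rm (S h)) -> forall x, Gm (S x) = S (Gm x).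
  move=> e; apply: peel; [lint | lint |] => y.
  by rewrite -TS_form -ST_form e.
have e1 x : Gm (S x) * u = u * x by rewrite K1 SK.
have e2 x : S u * S (Gm x) = x * S u by rewrite -(S_mul hH) K1 (S_mul hH) SiK.
split; [|split].
- move=> cc; apply: GS => x.
  have Sw : S winv * S u = 1 by rewrite -(S_mul hH) uw (S1 hH).
  have e3 : S u * Gm (S x) * u = S u * S (Gm x) * u.
    rewrite -mulrA e1 mulrA.
    rewrite -cc.
    by rewrite e2 mulrA.
  transitivity (S winv * (S u * Gm (S x) * u) * winv).
    by rewrite !mulrA Sw mul1r -mulrA uw mulr1.
  by rewrite e3 !mulrA Sw mul1r -mulrA uw mulr1.
- by move=> e h; rewrite nt e SiK.
- move=> e.
  have e' : forall h, S (Tmap Delta S Rm h) = Tmap Delta S Rm (S h).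
    by move=> h; rewrite /Tmap (e (S h)) nt SK.
  move=> x; have g := SG e' x.
  by rewrite mulrA -[x * S u]e2 -g -mulrA e1 mulrA.
Qed.

End R.



Unset Implicit Arguments.

Theorem proposition3p6 (k : fieldType) (H : algType k)
    (Delta : H -> seq (H * H)) (eps : H -> k) (S Sinv : H -> H)
    (Rm : seq (H * H)) :
  is_hopf Delta eps S ->
  cancel S Sinv -> cancel Sinv S ->
  is_semiquasitriangular Delta S Rm ->
  [<-> in_centre (S (drinfeld S Rm) * drinfeld S Rm);
       forall h : H, S (Tmap Delta S Rm h) = Tmap Delta S Rm (S h);
       forall h : H, mu (nu Delta S Rm h) = mu (nu_tilde Delta S Rm Sinv h)].
Proof.
move=> hH SK SiK hR.
exact: (main hH SK SiK hR).
Qed.
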